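(* Let $a,b,c\in S^0$ be real-valued on $[0,T]\times\mathbb R^n\times\mathbb R^n$ with $b\ge\delta_1t$, $|ac|\le\bar\epsilon b^2$, $|c|\le\bar\epsilon b^{3/2}$ ($\bar\epsilon$ a sufficiently small absolute constant) and $\partial_tc=\mathcal O(b)$. Then there is $\epsilon>0$ such that the matrix $S-\epsilon t\,\partial_tS$ is positive semidefinite at every point of $[0,T]\times\mathbb R^n\times\mathbb R^n$.
   Context: $S^0=S^0_{1,0}(\mathbb R^n\times\mathbb R^n)$, symbols depending smoothly on $t\in[0,T]$ with seminorms of the symbols and of their $t$-derivatives bounded uniformly; $f=\mathcal O(g)$ means $|f|\le Cg$ on $[0,T]\times\mathbb R^{2n}$. $S=\frac13\begin{pmatrix}3&2a&-b\\ 2a&2(a^2+b)&-ab-3c\\ -b&-ab-3c&b^2-2ac\end{pmatrix}$. *)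

(* Defs.v *)
From Stdlib Require Import Reals.
From mathcomp Require Import ssreflect ssrbool eqtype ssrnat seq fintype bigop.
Open Scope R_scope.

Definition deriv_on (T : R) (g : R -> R) (t l : R) : Prop :=
  forall eps, 0 < eps -> exists delta, 0 < delta /\
    forall h, h <> 0 -> Rabs h < delta -> 0 <= t + h <= T ->
      Rabs ((g (t + h) - g t) / h - l) < eps.

(* functions of (t, x, xi) in [0,T] x R^n x R^n, R^n = 'I_n -> R *)
Definition sym_fun (n : nat) := R -> ('I_n -> R) -> ('I_n -> R) -> R.

Definition upd {n : nat} (x : 'I_n -> R) (i : 'I_n) (s : R) : 'I_n -> R :=
  fun j => if j == i then x j + s else x j.

Definition eucl_norm {n : nat} (xi : 'I_n -> R) : R :=
  sqrt (\big[Rplus/0]_(i < n) (xi i ^ 2)).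

Inductive dir (n : nat) : Type :=
| Dt : dir n
| Dx : 'I_n -> dir n
| Dxi : 'I_n -> dir n.
Arguments Dt {n}.
Arguments Dx {n} _.
Arguments Dxi {n} _.

Definition is_xi_dir {n : nat} (d : dir n) : bool :=
  match d with Dxi _ => true | _ => false end.

Definition is_partial (T : R) {n : nat} (d : dir n) (f g : sym_fun n) : Prop :=
  forall t x xi, 0 <= t <= T ->
  match d with
  | Dt => deriv_on T (fun s => f s x xi) t (g t x xi)
  | Dx i => derivable_pt_lim (fun s => f t (upd x i s) xi) 0 (g t x xi)
  | Dxi i => derivable_pt_lim (fun s => f t x (upd xi i s)) 0 (g t x xi)
  end.

(* f is a symbol in S^0_{1,0}, depending smoothly on t in [0,T], with all
   seminorms (including t-derivatives) uniformly bounded: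
   F l is the iterated partial derivative of f along the list of directions l,
   and |d_t^k d_x^alpha d_xi^beta f| <= C (1+|xi|)^{-|beta|}. *)
Definition in_S0 (T : R) {n : nat} (f : sym_fun n) : Prop :=
  exists F : seq (dir n) -> sym_fun n,
    (forall t x xi, 0 <= t <= T -> F nil t x xi = f t x xi) /\
    (forall d l, is_partial T d (F l) (F (d :: l))) /\
    (forall l, exists C, forall t x xi, 0 <= t <= T ->
       Rabs (F l t x xi) <= C / (1 + eucl_norm xi) ^ (count is_xi_dir l)).

Definition Sent (i j : nat) (a b c : R) : R :=
  match i, j with
  | O, O => 1
  | O, 1%nat | 1%nat, O => 2 * a / 3
  | O, 2%nat | 2%nat, O => - b / 3
  | 1%nat, 1%nat => 2 * (a ^ 2 + b) / 3
  | 1%nat, 2%nat | 2%nat, 1%nat => (- (a * b) - 3 * c) / 3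
  | 2%nat, 2%nat => (b ^ 2 - 2 * a * c) / 3
  | _, _ => 0
  end.

Definition psd3 (m : nat -> nat -> R) : Prop :=
  forall v : nat -> R,
    0 <= sum_f_R0 (fun i => sum_f_R0 (fun j => v i * m i j * v j) 2) 2.

(* Main.v *)
Require Import Defs.
From Stdlib Require Import Reals Lra Psatz.
From mathcomp Require Import ssreflect ssrbool eqtype ssrnat seq fintype bigop.
Open Scope R_scope.

Lemma deriv_on_ext T g1 g2 t l : 0 <= t <= T -> (forall s, 0 <= s <= T -> g1 s = g2 s) ->
  deriv_on T g1 t l -> deriv_on T g2 t l.
Proof.
intros Ht He H eps Heps. destruct (H eps Heps) as [d [Hd Hh]]. exists d; split; auto.
intros h H1 H2 H3. rewrite -(He (t+h)) // -(He t) //. apply Hh; auto.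
Qed.

Lemma deriv_on_const T k t : deriv_on T (fun _ => k) t 0.
Proof.
intros eps Heps; exists 1; split; [lra|]. intros h H1 H2 H3.
replace ((k - k) / h - 0) with 0 by (field; auto). rewrite Rabs_R0; lra.
Qed.

Lemma deriv_on_plus T f g t l1 l2 : deriv_on T f t l1 -> deriv_on T g t l2 ->
  deriv_on T (fun s => f s + g s) t (l1 + l2).
Proof.
intros Hf Hg eps Heps.
destruct (Hf (eps/2)) as [d1 [Hd1 H1]]; [lra|].
destruct (Hg (eps/2)) as [d2 [Hd2 H2]]; [lra|].
exists (Rmin d1 d2); split; [apply Rmin_pos; auto|].
intros h Hh0 Hh Ht.
have A1 := H1 h Hh0 (Rlt_le_trans _ _ _ Hh (Rmin_l _ _)) Ht.
have A2 := H2 h Hh0 (Rlt_le_trans _ _ _ Hh (Rmin_r _ _)) Ht.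
replace ((f (t + h) + g (t + h) - (f t + g t)) / h - (l1 + l2)) with
  (((f (t + h) - f t) / h - l1) + ((g (t + h) - g t) / h - l2)) by (field; auto).
eapply Rle_lt_trans; [apply Rabs_triang|]. lra.
Qed.

Lemma deriv_on_opp T f t l : deriv_on T f t l -> deriv_on T (fun s => - f s) t (- l).
Proof.
intros Hf eps Heps. destruct (Hf eps Heps) as [d [Hd H]]. exists d; split; auto.
intros h H1 H2 H3. replace ((- f (t + h) - - f t) / h - - l) with (- ((f (t + h) - f t) / h - l))
  by (field; auto). rewrite Rabs_Ropp; auto.
Qed.

Lemma prod_bound u w h G F l1 l2 e : 0 < e ->
  Rabs u <= Rmin 1 (e / (3 * (Rabs G + 1))) ->
  Rabs w <= Rmin 1 (e / (3 * (Rabs F + 1))) ->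
  Rabs h < e / (3 * ((Rabs l1 + 1) * (Rabs l2 + 1))) ->
  Rabs (u * G + F * w + h * ((l1 + u) * (l2 + w))) < e.
Proof.
intros He Hu Hw Hh.
have G0 := Rabs_pos G. have F0 := Rabs_pos F.
have L10 := Rabs_pos l1. have L20 := Rabs_pos l2.
have Hu1 : Rabs u <= 1 by (eapply Rle_trans; [apply Hu| apply Rmin_l]).
have Hu2 : Rabs u * (3 * (Rabs G + 1)) <= e.
{ have := Rle_trans _ _ _ Hu (Rmin_r _ _). intro K.
  apply (Rmult_le_compat_r (3 * (Rabs G + 1))) in K; [|lra].
  rewrite /Rdiv Rmult_assoc Rinv_l in K; lra. }
have Hw1 : Rabs w <= 1 by (eapply Rle_trans; [apply Hw| apply Rmin_l]).
have Hw2 : Rabs w * (3 * (Rabs F + 1)) <= e.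
{ have := Rle_trans _ _ _ Hw (Rmin_r _ _). intro K.
  apply (Rmult_le_compat_r (3 * (Rabs F + 1))) in K; [|lra].
  rewrite /Rdiv Rmult_assoc Rinv_l in K; lra. }
have Hh2 : Rabs h * (3 * ((Rabs l1 + 1) * (Rabs l2 + 1))) < e.
{ apply (Rmult_lt_compat_r (3 * ((Rabs l1 + 1) * (Rabs l2 + 1)))) in Hh; [|nra].
  rewrite /Rdiv Rmult_assoc Rinv_l in Hh; nra. }
have B1 : Rabs (l1 + u) <= Rabs l1 + 1 by (eapply Rle_trans; [apply Rabs_triang|lra]).
have B2 : Rabs (l2 + w) <= Rabs l2 + 1 by (eapply Rle_trans; [apply Rabs_triang|lra]).
eapply Rle_lt_trans; [apply Rabs_triang|].
have T1 : Rabs (u * G + F * w) <= Rabs u * Rabs G + Rabs F * Rabs w.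
{ eapply Rle_trans; [apply Rabs_triang|]. rewrite !Rabs_mult; lra. }
rewrite !Rabs_mult.
have P0 := Rabs_pos (l1+u). have P1 := Rabs_pos (l2+w). have H0 := Rabs_pos h.
have U0 := Rabs_pos u. have W0 := Rabs_pos w.
have : Rabs h * (Rabs (l1 + u) * Rabs (l2 + w)) <= Rabs h * ((Rabs l1 + 1) * (Rabs l2 + 1)).
{ apply Rmult_le_compat_l; auto. apply Rmult_le_compat; auto. }
nra.
Qed.

Lemma deriv_on_mult T f g t l1 l2 : deriv_on T f t l1 -> deriv_on T g t l2 ->
  deriv_on T (fun s => f s * g s) t (l1 * g t + f t * l2).
Proof.
intros Hf Hg eps Heps.
have P1 : 0 < Rmin 1 (eps / (3 * (Rabs (g t) + 1))).
{ apply Rmin_pos; [lra|]. have := Rabs_pos (g t). intro. apply Rdiv_lt_0_compat; lra. }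
have P2 : 0 < Rmin 1 (eps / (3 * (Rabs (f t) + 1))).
{ apply Rmin_pos; [lra|]. have := Rabs_pos (f t). intro. apply Rdiv_lt_0_compat; lra. }
have P3 : 0 < eps / (3 * ((Rabs l1 + 1) * (Rabs l2 + 1))).
{ have := Rabs_pos l1. have := Rabs_pos l2. intros. apply Rdiv_lt_0_compat; nra. }
destruct (Hf _ P1) as [d1 [Hd1 H1]].
destruct (Hg _ P2) as [d2 [Hd2 H2]].
exists (Rmin d1 (Rmin d2 (eps / (3 * ((Rabs l1 + 1) * (Rabs l2 + 1)))))).
split; [repeat apply Rmin_pos; auto|].
intros h Hh0 Hh Ht.
have E1 := Rmin_l d1 (Rmin d2 (eps / (3 * ((Rabs l1 + 1) * (Rabs l2 + 1))))).
have E2 := Rmin_r d1 (Rmin d2 (eps / (3 * ((Rabs l1 + 1) * (Rabs l2 + 1))))).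
have E3 := Rmin_l d2 (eps / (3 * ((Rabs l1 + 1) * (Rabs l2 + 1)))).
have E4 := Rmin_r d2 (eps / (3 * ((Rabs l1 + 1) * (Rabs l2 + 1)))).
have A1 := H1 h Hh0 ltac:(lra) Ht.
have A2 := H2 h Hh0 ltac:(lra) Ht.
set u := (f (t + h) - f t) / h - l1 in A1.
set w := (g (t + h) - g t) / h - l2 in A2.
have Ef : f (t + h) = f t + h * (l1 + u) by (rewrite /u; field; auto).
have Eg : g (t + h) = g t + h * (l2 + w) by (rewrite /w; field; auto).
replace ((f (t + h) * g (t + h) - f t * g t) / h - (l1 * g t + f t * l2)) with
  (u * g t + f t * w + h * ((l1 + u) * (l2 + w))).
2:{ rewrite Ef Eg. field; auto. }
apply prod_bound; auto; lra.
Qed.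

Lemma deriv_on_unique T g t l1 l2 : 0 < T -> 0 <= t <= T ->
  deriv_on T g t l1 -> deriv_on T g t l2 -> l1 = l2.
Proof.
intros HT Ht H1 H2. destruct (Req_dec l1 l2) as [|Hne]; auto.
have He : 0 < Rabs (l1 - l2) / 2 by (have := Rabs_pos_lt (l1 - l2) ltac:(lra); lra).
destruct (H1 _ He) as [d1 [Hd1 K1]]. destruct (H2 _ He) as [d2 [Hd2 K2]].
set d := Rmin (Rmin d1 d2) T.
have Hd : 0 < d by (repeat apply Rmin_pos; auto).
have Hdd1 : d <= d1 by (rewrite /d; have := Rmin_l (Rmin d1 d2) T; have := Rmin_l d1 d2; lra).
have Hdd2 : d <= d2 by (rewrite /d; have := Rmin_l (Rmin d1 d2) T; have := Rmin_r d1 d2; lra).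
have HdT : d <= T by apply Rmin_r.
have [h [Hh0 [Hh Hth]]] : exists h, h <> 0 /\ Rabs h < d /\ 0 <= t + h <= T.
{ destruct (Rle_lt_dec t (T/2)).
  - exists (Rmin (d/2) (T/2)). have := Rmin_l (d/2) (T/2). have := Rmin_r (d/2) (T/2).
    have : 0 < Rmin (d/2) (T/2) by (apply Rmin_pos; lra). intros.
    rewrite Rabs_pos_eq; [|lra]. repeat split; lra.
  - exists (- Rmin (d/2) (T/2)). have := Rmin_l (d/2) (T/2). have := Rmin_r (d/2) (T/2).
    have : 0 < Rmin (d/2) (T/2) by (apply Rmin_pos; lra). intros.
    rewrite Rabs_Ropp Rabs_pos_eq; [|lra]. repeat split; lra. }
have A1 := K1 h Hh0 ltac:(lra) Hth. have A2 := K2 h Hh0 ltac:(lra) Hth.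
have : Rabs (l1 - l2) <= Rabs ((g (t + h) - g t) / h - l2) + Rabs ((g (t + h) - g t) / h - l1).
{ replace (l1 - l2) with (((g (t + h) - g t) / h - l2) - ((g (t + h) - g t) / h - l1)) by ring.
  eapply Rle_trans; [apply Rabs_triang|]. rewrite Rabs_Ropp; lra. }
lra.
Qed.

Lemma L1 K p q x y be : 0 <= K -> 0 <= p -> 0 <= q -> Rabs be <= K * p * q ->
  be * x * y <= K * ((p * x) ^ 2 + (q * y) ^ 2) / 2.
Proof.
intros HK Hp Hq Hb.
have E1 : be * x * y <= Rabs be * (Rabs x * Rabs y).
{ rewrite -!Rabs_mult. rewrite Rmult_assoc. apply Rle_abs. }
have E2 : Rabs be * (Rabs x * Rabs y) <= K * p * q * (Rabs x * Rabs y).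
{ apply Rmult_le_compat_r; [apply Rmult_le_pos; apply Rabs_pos|auto]. }
have E3 : p * q * (Rabs x * Rabs y) <= ((p * x) ^ 2 + (q * y) ^ 2) / 2.
{ have := pow2_ge_0 (p * Rabs x - q * Rabs y).
  have : Rabs x ^ 2 = x ^ 2 by apply pow2_abs.
  have : Rabs y ^ 2 = y ^ 2 by apply pow2_abs. nra. }
have E4 : K * (p * q * (Rabs x * Rabs y)) <= K * (((p * x) ^ 2 + (q * y) ^ 2) / 2).
{ apply Rmult_le_compat_l; auto. }
lra.
Qed.

Lemma ab2 k x y K X Y : Rabs k <= K -> Rabs x <= X -> Rabs y <= Y -> Rabs (k * x * y) <= K * X * Y.
Proof.
intros H1 H2 H3. rewrite !Rabs_mult.
have := Rabs_pos k. have := Rabs_pos x. have := Rabs_pos y. intros.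
apply Rmult_le_compat; try lra; [apply Rmult_le_pos; lra|]. apply Rmult_le_compat; lra.
Qed.

Lemma ab3 k x y z K X Y Z : Rabs k <= K -> Rabs x <= X -> Rabs y <= Y -> Rabs z <= Z ->
  Rabs (k * x * y * z) <= K * X * Y * Z.
Proof.
intros H1 H2 H3 H4. rewrite Rabs_mult.
have := Rabs_pos z. have := Rabs_pos (k * x * y). intros.
apply Rmult_le_compat; try lra. apply ab2; auto.
Qed.

Definition Ef (a b c da db dc : R) (i j : nat) : R :=
  match i, j with
  | O, O => 0
  | O, 1%nat | 1%nat, O => 2 * da / 3
  | O, 2%nat | 2%nat, O => - db / 3
  | 1%nat, 1%nat => 2 * (2 * a * da + db) / 3
  | 1%nat, 2%nat | 2%nat, 1%nat => (- (da * b + a * db) - 3 * dc) / 3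
  | 2%nat, 2%nat => (2 * b * db - 2 * (da * c + a * dc)) / 3
  | _, _ => 0
  end.

Lemma key a c da db dc t del A A1 B1 C1 R r :
  0 <= r -> r <= R -> 0 <= t -> 0 < del -> del * t <= r * r ->
  Rabs a <= A -> Rabs da <= A1 -> Rabs db <= B1 -> 0 <= C1 -> Rabs dc <= C1 * (r * r) ->
  Rabs (a * c) <= 1/100 * (r * r) ^ 2 -> Rabs c <= 1/100 * (r * r * r) ->
  psd3 (fun i j => Sent i j a (r * r) c -
     del / (36 * (6 * (1 + A + A1 + B1 + C1 + R) ^ 2)) * t * Ef a (r * r) c da db dc i j).
Proof.
intros Hr HrR Ht Hdel Htb HA HA1 HB1 HC1 Hdc Hac Hc v.
have A0 := Rabs_pos a. have A10 := Rabs_pos da. have B10 := Rabs_pos db.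
have Dc0 := Rabs_pos dc. have C0 := Rabs_pos c.
set S := 1 + A + A1 + B1 + C1 + R.
set K0 := 6 * S ^ 2.
have HS : 1 <= S by (rewrite /S; lra).
have HK0 : 0 < K0 by (rewrite /K0; nra).
set tau := del * t.
have Htau0 : 0 <= tau by (rewrite /tau; nra).
have Htau : tau <= r * r by auto.
have SA : A <= S by (rewrite /S; lra).
have SA1 : A1 <= S by (rewrite /S; lra).
have SB1 : B1 <= S by (rewrite /S; lra).
have SC1 : C1 <= S by (rewrite /S; lra).
have SR : R <= S by (rewrite /S; lra).
have Sa : Rabs a <= S by lra. have HA1' : Rabs da <= S by lra. have Sdb : Rabs db <= S by lra.
set v0 := v 0%nat. set v1 := v 1%nat. set v2 := v 2%nat.
set w := v0 + (2 * a * v1 - r * r * v2) / 3.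
set q := (a ^ 2 + 3 * (r*r)) * v1 ^ 2 - (a * (r*r) + 9 * c) * v1 * v2 + ((r*r) ^ 2 - 3 * a * c) * v2 ^ 2.
set N1 := (a * v1) ^ 2 + (r * v1) ^ 2 + (r * r * v2) ^ 2.
have Hq : N1 / 4 <= q.
{ have Q1 : a * (r * r) * v1 * v2 <= ((a * v1) ^ 2 + (r * r * v2) ^ 2) / 2.
  { have := pow2_ge_0 (a * v1 - r * r * v2). nra. }
  have Q2 : 9 * c * v1 * v2 <= 9 / 100 * ((r * v1) ^ 2 + (r * r * v2) ^ 2) / 2.
  { apply L1; try lra. rewrite Rabs_mult. have : Rabs 9 = 9 by (rewrite Rabs_pos_eq; lra). nra. }
  have Q3 : 3 * a * c * v2 ^ 2 <= 3 / 100 * (r * r * v2) ^ 2.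
  { have : 3 * a * c * v2 ^ 2 <= 3 * Rabs (a * c) * v2 ^ 2.
    { have := Rle_abs (a * c). have : 0 <= v2 ^ 2 by nra. nra. }
    have : 0 <= v2 ^ 2 by nra. nra. }
  rewrite /q /N1. nra. }
set P3 := (4 * tau * da) * w * v1 + (-2 * tau * db) * w * v2
  + (4/3 * tau * a * da) * v1 * v1 + (2 * tau * db) * v1 * v1
  + (-(2/3) * tau * da * (r*r)) * v1 * v2 + (-(2/3) * tau * a * db) * v1 * v2
  + (-6 * tau * dc) * v1 * v2 + (4/3 * tau * (r*r) * db) * v2 * v2
  + (-2 * tau * da * c) * v2 * v2 + (-2 * tau * a * dc) * v2 * v2.
have T1 := L1 K0 1 r w v1 (4 * tau * da).
have T2 := L1 K0 1 (r*r) w v2 (-2 * tau * db).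
have T3 := L1 K0 r (Rabs a) v1 v1 (4/3 * tau * a * da).
have T4 := L1 K0 r r v1 v1 (2 * tau * db).
have T5 := L1 K0 r (r*r) v1 v2 (-(2/3) * tau * da * (r*r)).
have T6 := L1 K0 (Rabs a) (r*r) v1 v2 (-(2/3) * tau * a * db).
have T7 := L1 K0 r (r*r) v1 v2 (-6 * tau * dc).
have T8 := L1 K0 (r*r) (r*r) v2 v2 (4/3 * tau * (r*r) * db).
have T9 := L1 K0 (r*r) (r*r) v2 v2 (-2 * tau * da * c).
have T10 := L1 K0 (r*r) (r*r) v2 v2 (-2 * tau * a * dc).
have Hrr : r * r <= S * r by (apply Rmult_le_compat_r; lra).
have Hrr0 : 0 <= r * r by (apply Rmult_le_pos; lra).
have Hts : tau <= S * r by lra.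
have Ht0 : Rabs tau = tau by apply Rabs_pos_eq.
have Hr0 : Rabs (r * r) = r * r by apply Rabs_pos_eq.
have HdcS : Rabs dc <= S * (r * r).
{ have : C1 * (r * r) <= S * (r * r). { apply Rmult_le_compat_r; [exact Hrr0|lra]. } lra. }
have HcS : Rabs c <= (r * r) * S / 100.
{ have : r * r * r <= r * r * S. { apply Rmult_le_compat_l; [exact Hrr0|lra]. } lra. }
have HS2 : 0 <= S * S by (apply Rmult_le_pos; lra).
have HSS : S <= S * S.
{ have : 1 * S <= S * S. { apply Rmult_le_compat_r; lra. } lra. }
specialize (T1 ltac:(lra) ltac:(lra) Hr).
specialize (T2 ltac:(lra) ltac:(lra) Hrr0).
specialize (T3 ltac:(lra) Hr A0).
specialize (T4 ltac:(lra) Hr Hr).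
specialize (T5 ltac:(lra) Hr Hrr0).
specialize (T6 ltac:(lra) A0 Hrr0).
specialize (T7 ltac:(lra) Hr Hrr0).
specialize (T8 ltac:(lra) Hrr0 Hrr0).
specialize (T9 ltac:(lra) Hrr0 Hrr0).
specialize (T10 ltac:(lra) Hrr0 Hrr0).
have c4 : Rabs 4 <= 4 by (unfold Rabs; destruct (Rcase_abs 4); lra).
have cm2 : Rabs (-2) <= 2 by (unfold Rabs; destruct (Rcase_abs (-2)); lra).
have c43 : Rabs (4/3) <= 4/3 by (unfold Rabs; destruct (Rcase_abs (4/3)); lra).
have c2 : Rabs 2 <= 2 by (unfold Rabs; destruct (Rcase_abs 2); lra).
have cm23 : Rabs (-(2/3)) <= 2/3 by (unfold Rabs; destruct (Rcase_abs (-(2/3))); lra).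
have cm6 : Rabs (-6) <= 6 by (unfold Rabs; destruct (Rcase_abs (-6)); lra).
have Htr : Rabs tau <= r * r by lra.
have Hts' : Rabs tau <= S * r by lra.
have Hrr' : Rabs (r * r) <= r * r by lra.
have Ha' : Rabs a <= Rabs a by lra.
have P5 : 0 <= S * S * Rabs a * (r * r) by (repeat apply Rmult_le_pos; lra).
have HSSr : 0 <= S * S * r by (apply Rmult_le_pos; lra).
have P1 : 0 <= S * S * r * Rabs a by (repeat apply Rmult_le_pos; lra).
have P2 : 0 <= S * S * r * (r * r) by (repeat apply Rmult_le_pos; lra).
have P3' : 0 <= S * S * (r * r) * (r * r) by (repeat apply Rmult_le_pos; lra).
have P4 : 0 <= S * S * (r * r) by (repeat apply Rmult_le_pos; lra).
have Q1 : S * (r * r) <= S * S * (r * r) by (apply Rmult_le_compat_r; lra).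
have Q2 : S * Rabs a * (r * r) <= S * S * Rabs a * (r * r).
{ apply Rmult_le_compat_r; [lra|]. apply Rmult_le_compat_r; lra. }
have Q3 : S * (r * r) * (r * r) <= S * S * (r * r) * (r * r).
{ apply Rmult_le_compat_r; [lra|]. apply Rmult_le_compat_r; lra. }
have U1 := T1 ltac:(have := ab2 _ _ _ _ _ _ c4 Hts' HA1'; rewrite /K0; lra).
have U2 := T2 ltac:(have := ab2 _ _ _ _ _ _ cm2 Htr Sdb; rewrite /K0; lra).
have U3 := T3 ltac:(have := ab3 _ _ _ _ _ _ _ _ c43 Hts' Ha' HA1'; rewrite /K0; lra).
have U4 := T4 ltac:(have := ab2 _ _ _ _ _ _ c2 Htr Sdb; rewrite /K0; lra).
have U5 := T5 ltac:(have := ab3 _ _ _ _ _ _ _ _ cm23 Hts' HA1' Hrr'; rewrite /K0; lra).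
have U6 := T6 ltac:(have := ab3 _ _ _ _ _ _ _ _ cm23 Htr Ha' Sdb; rewrite /K0; lra).
have U7 := T7 ltac:(have := ab2 _ _ _ _ _ _ cm6 Hts' HdcS; rewrite /K0; lra).
have U8 := T8 ltac:(have := ab3 _ _ _ _ _ _ _ _ c43 Htr Hrr' Sdb; rewrite /K0; lra).
have U9 := T9 ltac:(have := ab3 _ _ _ _ _ _ _ _ cm2 Htr HA1' HcS; rewrite /K0; lra).
have U10 := T10 ltac:(have := ab3 _ _ _ _ _ _ _ _ cm2 Htr Sa HdcS; rewrite /K0; lra).
have Habs : K0 * (Rabs a * v1) ^ 2 = K0 * (a * v1) ^ 2.
{ rewrite !Rpow_mult_distr pow2_abs. done. }
have N0 : 0 <= K0 * (1 * w) ^ 2 by (apply Rmult_le_pos; [lra|apply pow2_ge_0]).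
have N1' : 0 <= K0 * (a * v1) ^ 2 by (apply Rmult_le_pos; [lra|apply pow2_ge_0]).
have N2 : 0 <= K0 * (r * v1) ^ 2 by (apply Rmult_le_pos; [lra|apply pow2_ge_0]).
have N3 : 0 <= K0 * (r * r * v2) ^ 2 by (apply Rmult_le_pos; [lra|apply pow2_ge_0]).
have PB : P3 <= 6 * K0 * ((1 * w) ^ 2 + (a * v1) ^ 2 + (r * v1) ^ 2 + (r * r * v2) ^ 2).
{ rewrite /P3. lra. }
have PB2 : P3 / (36 * K0) <= ((1 * w) ^ 2 + N1) / 6.
{ apply (Rmult_le_reg_r (36 * K0)); [lra|].
  replace (P3 / (36 * K0) * (36 * K0)) with P3 by (field; lra).
  rewrite /N1. lra. }
cbn [sum_f_R0 Sent Ef]. rewrite -/v0 -/v1 -/v2.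
apply (Rmult_le_reg_l 3); [lra|]. rewrite Rmult_0_r.
match goal with |- _ <= 3 * ?X =>
  have E : 3 * X = 3 * w ^ 2 + 2/3 * q - P3 / (36 * K0) end.
{ rewrite /P3 /q /w /tau. field. lra. }
rewrite E. have := pow2_ge_0 w. lra.
Qed.
Lemma deriv_on_extall T g1 g2 t l : (forall s, g1 s = g2 s) ->
  deriv_on T g1 t l -> deriv_on T g2 t l.
Proof.
intros He H eps Heps. destruct (H eps Heps) as [d [Hd Hh]]. exists d; split; auto.
intros h H1 H2 H3. rewrite -(He (t+h)) -(He t). apply Hh; auto.
Qed.

Lemma deriv_on_pow2 T f t l : deriv_on T f t l ->
  deriv_on T (fun s => f s ^ 2) t (l * f t + f t * l).
Proof.
intro H. apply (deriv_on_extall T (fun s => f s * f s)); [intro s; ring|].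
apply deriv_on_mult; auto.
Qed.

Lemma deriv_on_eqv T g t l l' : deriv_on T g t l -> l = l' -> deriv_on T g t l'.
Proof. intros H ->; auto. Qed.

Ltac dtac Ha Hb Hc := first [ apply deriv_on_const | apply deriv_on_plus | apply deriv_on_opp
  | apply deriv_on_mult | apply deriv_on_pow2 | exact Ha | exact Hb | exact Hc ].

Lemma Sent_deriv T fa fb fc t la lb lc i j :
  deriv_on T fa t la -> deriv_on T fb t lb -> deriv_on T fc t lc ->
  (i < 3)%nat -> (j < 3)%nat ->
  deriv_on T (fun s => Sent i j (fa s) (fb s) (fc s)) t (Ef (fa t) (fb t) (fc t) la lb lc i j).
Proof.
intros Ha Hb Hc Hi Hj.
destruct i as [|[|[|i]]]; try discriminate;
destruct j as [|[|[|j]]]; try discriminate;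
(eapply deriv_on_eqv;
 [ cbv beta iota delta [Sent Rdiv Rminus]; repeat (dtac Ha Hb Hc)
 | cbn [Ef]; field ]).
Qed.

Lemma psd3_ext (m m' : nat -> nat -> R) :
  (forall i j, (i < 3)%nat -> (j < 3)%nat -> m i j = m' i j) -> psd3 m' -> psd3 m.
Proof.
intros He H v. have := H v. cbn [sum_f_R0].
rewrite !He //.
Qed.

Lemma sqrt_bound b B : 0 <= b -> Rabs b <= Rabs B -> sqrt b <= 1 + Rabs B.
Proof.
intros H0 H1. have := sqrt_pos b. have := sqrt_sqrt b H0. have := Rle_abs b. intros.
destruct (Rle_lt_dec (sqrt b) (1 + Rabs B)); auto. nra.
Qed.

Lemma S0_bound T n (F : sym_fun n) C t x xi :
  0 <= t <= T ->
  (forall t x xi, 0 <= t <= T -> Rabs (F t x xi) <= C / (1 + eucl_norm xi) ^ 0) ->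
  Rabs (F t x xi) <= Rabs C.
Proof.
intros Ht H. have := H t x xi Ht. rewrite pow_O.
replace (C / 1) with C by field. have := Rle_abs C. lra.
Qed.

Theorem mainTheorem10 :
  exists eps_bar : R, 0 < eps_bar /\
  forall (n : nat) (T delta1 : R) (a b c : sym_fun n),
    0 < T -> 0 < delta1 ->
    in_S0 T a -> in_S0 T b -> in_S0 T c ->
    (forall t x xi, 0 <= t <= T -> delta1 * t <= b t x xi) ->
    (forall t x xi, 0 <= t <= T ->
       Rabs (a t x xi * c t x xi) <= eps_bar * (b t x xi) ^ 2) ->
    (forall t x xi, 0 <= t <= T ->
       Rabs (c t x xi) <= eps_bar * (b t x xi * sqrt (b t x xi))) ->
    (exists C, forall t x xi, 0 <= t <= T ->
       exists dc, deriv_on T (fun s => c s x xi) t dc /\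
                  Rabs dc <= C * b t x xi) ->
    exists eps, 0 < eps /\
      forall t x xi, 0 <= t <= T ->
      forall D : nat -> nat -> R,
        (forall i j, (i < 3)%nat -> (j < 3)%nat ->
           deriv_on T (fun s => Sent i j (a s x xi) (b s x xi) (c s x xi)) t (D i j)) ->
        psd3 (fun i j => Sent i j (a t x xi) (b t x xi) (c t x xi) - eps * t * D i j).
Proof.
exists (1/100). split; [lra|].
intros n T del a b c HT Hdel Sa Sb _ Hb Hac Hc [C HC].
destruct Sa as [Fa [Fa0 [Fad Fab]]]. destruct Sb as [Fb [Fb0 [Fbd Fbb]]].
destruct (Fab nil) as [Ca HCa]. destruct (Fab [:: Dt]) as [Ca1 HCa1].
destruct (Fbb nil) as [Cb HCb]. destruct (Fbb [:: Dt]) as [Cb1 HCb1].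
set A := Rabs Ca. set A1 := Rabs Ca1. set B1 := Rabs Cb1. set C1 := Rabs C.
set R0 := 1 + Rabs Cb.
exists (del / (36 * (6 * (1 + A + A1 + B1 + C1 + R0) ^ 2))).
have HA : 0 <= A by apply Rabs_pos.
have HA1 : 0 <= A1 by apply Rabs_pos.
have HB1 : 0 <= B1 by apply Rabs_pos.
have HC1 : 0 <= C1 by apply Rabs_pos.
have HR0 : 0 <= R0 by (have := Rabs_pos Cb; rewrite /R0; lra).
split.
{ apply Rdiv_lt_0_compat; auto. have : 0 < (1 + A + A1 + B1 + C1 + R0) ^ 2.
  { apply pow_lt; lra. } lra. }
intros t x xi Ht D HD.
have Ea := S0_bound T n (Fa nil) Ca t x xi Ht HCa. rewrite Fa0 // in Ea.
have Eda := S0_bound T n (Fa [:: Dt]) Ca1 t x xi Ht HCa1.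
have Eb := S0_bound T n (Fb nil) Cb t x xi Ht HCb. rewrite Fb0 // in Eb.
have Edb := S0_bound T n (Fb [:: Dt]) Cb1 t x xi Ht HCb1.
have Dda : deriv_on T (fun s => a s x xi) t (Fa [:: Dt] t x xi).
{ apply (deriv_on_ext T (fun s => Fa nil s x xi)).
  - exact Ht.
  - intros s Hs; apply Fa0; auto.
  - apply (Fad Dt nil t x xi Ht). }
have Ddb : deriv_on T (fun s => b s x xi) t (Fb [:: Dt] t x xi).
{ apply (deriv_on_ext T (fun s => Fb nil s x xi)).
  - exact Ht.
  - intros s Hs; apply Fb0; auto.
  - apply (Fbd Dt nil t x xi Ht). }
destruct (HC t x xi Ht) as [dc [Ddc Hdc]].
have Hb0 : 0 <= b t x xi by (have := Hb t x xi Ht; nra).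
have Hdc' : Rabs dc <= C1 * b t x xi.
{ have := Rle_abs C. intro. have : C * b t x xi <= C1 * b t x xi by (apply Rmult_le_compat_r; auto).
  lra. }
set r := sqrt (b t x xi).
have Hr : 0 <= r by apply sqrt_pos.
have Ebr : b t x xi = r * r by (rewrite /r sqrt_sqrt //).
have HrR : r <= R0.
{ apply sqrt_bound; auto. }
apply (psd3_ext _ (fun i j => Sent i j (a t x xi) (r * r) (c t x xi) -
     del / (36 * (6 * (1 + A + A1 + B1 + C1 + R0) ^ 2)) * t *
     Ef (a t x xi) (r * r) (c t x xi) (Fa [:: Dt] t x xi) (Fb [:: Dt] t x xi) dc i j)).
{ intros i j Hi Hj. rewrite -Ebr.
  rewrite (deriv_on_unique T _ t (D i j) _ HT Ht (HD i j Hi Hj)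
    (Sent_deriv T _ _ _ t _ _ _ i j Dda Ddb Ddc Hi Hj)).
  reflexivity. }
have K1 : del * t <= r * r by (rewrite -Ebr; apply Hb; auto).
have K2 : Rabs dc <= C1 * (r * r) by (rewrite -Ebr; auto).
have K3 : Rabs (a t x xi * c t x xi) <= 1/100 * (r * r) ^ 2 by (rewrite -Ebr; apply Hac; auto).
have K4 : Rabs (c t x xi) <= 1/100 * (r * r * r).
{ have := Hc t x xi Ht. rewrite -/r Ebr. auto. }
apply (key _ _ _ _ _ _ _ _ _ _ _ _ _ Hr HrR (proj1 Ht) Hdel K1 Ea Eda Edb HC1 K2 K3 K4).
Qed.
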